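(* Let $n \ge 1$ and let $X_1,\ldots,X_n$ be independent Rademacher random variables (each $X_i$ takes the values $+1$ and $-1$ with probability $1/2$ each). Then \[ \mathbb{P}\Big(\sum_{i=1}^{n} X_i > \frac{\sqrt{n}}{2}\Big) \ge \frac{3}{32}. \] *)

(* Defs.v *)
From HB Require Import structures.
From mathcomp Require Import all_boot all_order all_algebra.
From mathcomp Require Import all_classical all_reals all_analysis.
Set Implicit Arguments. Unset Strict Implicit. Unset Printing Implicit Defensive.
Import Order.TTheory GRing.Theory Num.Theory.
Local Open Scope classical_set_scope.
Local Open Scope ring_scope.

Definition mutually_independent d (T : measurableType d) (R : realType)
    (P : probability T R) (n : nat) (X : 'I_n -> {RV P >-> R}) : Prop :=
  forall (J : {set 'I_n}) (B : 'I_n -> set R),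
    (forall i, measurable (B i)) ->
    P (\bigcap_(i in [set j | j \in J]) (X i @^-1` B i)) =
    (\prod_(i in J) P (X i @^-1` B i))%E.

Definition rademacher d (T : measurableType d) (R : realType)
    (P : probability T R) (Y : {RV P >-> R}) : Prop :=
  P (Y @^-1` [set 1]) = (1 / 2)%:E /\ P (Y @^-1` [set -1]) = (1 / 2)%:E.

(* Main.v *)
Require Import Defs.
From HB Require Import structures.
From mathcomp Require Import all_boot all_order all_algebra.
From mathcomp Require Import all_classical all_reals all_analysis.
From mathcomp Require Import ring lra.
Import Order.TTheory GRing.Theory Num.Theory.
Local Open Scope classical_set_scope.
Local Open Scope ring_scope.
Set Implicit Arguments. Unset Strict Implicit. Unset Printing Implicit Defensive.
Section Comb.
Variable R : realType.

Definition eps (b : bool) : R := if b then 1 else -1.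
Definition sgn n (f : {ffun 'I_n -> bool}) : R := \sum_(i < n) eps (f i).
Definition fcons n (b : bool) (g : {ffun 'I_n -> bool}) : {ffun 'I_n.+1 -> bool} :=
  [ffun i => if unlift ord0 i is Some j then g j else b].

Lemma split_sum n (F : {ffun 'I_n.+1 -> bool} -> R) :
  \sum_(f : {ffun 'I_n.+1 -> bool}) F f =
  \sum_(b : bool) \sum_(g : {ffun 'I_n -> bool}) F (fcons b g).
Proof.
rewrite pair_big /=.
rewrite (reindex (fun p : bool * {ffun 'I_n -> bool} => fcons p.1 p.2)) //=.
apply: onW_bij.
exists (fun f : {ffun 'I_n.+1 -> bool} => (f ord0, [ffun j => f (lift ord0 j)])).
  move=> [b g] /=; congr pair; first by rewrite ffunE unlift_none.
  by apply/ffunP => j; rewrite !ffunE liftK.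
move=> f; apply/ffunP => i; rewrite !ffunE /=.
by case: unliftP => [j ->|->]; rewrite ?ffunE.
Qed.

Lemma sgn_cons n b (g : {ffun 'I_n -> bool}) : sgn (fcons b g) = eps b + sgn g.
Proof.
rewrite /sgn big_ord_recl ffunE unlift_none; congr (_ + _).
by apply: eq_bigr => i _; rewrite ffunE liftK.
Qed.

Lemma moments n :
  [/\ \sum_(f : {ffun 'I_n -> bool}) 1 = 2 ^+ n :> R,
      \sum_(f : {ffun 'I_n -> bool}) sgn f ^+ 2 = n%:R * 2 ^+ n &
      \sum_(f : {ffun 'I_n -> bool}) sgn f ^+ 4 = (3 * n%:R ^+ 2 - 2 * n%:R) * 2 ^+ n].
Proof.
elim: n => [|n [IH0 IH2 IH4]].
  have s0 : forall f : {ffun 'I_0 -> bool}, sgn f = 0 by move=> f; rewrite /sgn big_ord0.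
  have c0 : \sum_(f : {ffun 'I_0 -> bool}) (1:R) = 1.
    rewrite big_const card_ffun card_ord card_bool /=; by rewrite addr0.
  split; first by rewrite c0.
  - under eq_bigr do rewrite s0 expr0n /=.
    by rewrite big1 // mul0r.
  - under eq_bigr do rewrite s0 expr0n /=.
    rewrite big1 //; ring.
have E1 : (n.+1%:R : R) = n%:R + 1 by rewrite natr1.
have E2 : (2:R) ^+ n.+1 = 2 * 2 ^+ n by rewrite exprS.
rewrite E1 E2 !split_sum !big_bool /= -!big_split /=; split.
- by rewrite big_split /= IH0; lra.
- under eq_bigr do rewrite !sgn_cons /eps.
  have -> : \sum_(i : {ffun 'I_n -> bool}) ((1 + sgn i) ^+ 2 + (-1 + sgn i) ^+ 2)
     = \sum_(i : {ffun 'I_n -> bool}) (2 * sgn i ^+ 2 + 2 * 1).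
    by apply: eq_bigr => i _; ring.
  rewrite big_split /= -!mulr_sumr IH2 IH0; ring.
- under eq_bigr do rewrite !sgn_cons /eps.
  have -> : \sum_(i : {ffun 'I_n -> bool}) ((1 + sgn i) ^+ 4 + (-1 + sgn i) ^+ 4)
     = \sum_(i : {ffun 'I_n -> bool}) (2 * sgn i ^+ 4 + 12 * sgn i ^+ 2 + 2 * 1).
    by apply: eq_bigr => i _; ring.
  rewrite !big_split /= -!mulr_sumr IH4 IH2 IH0; ring.
Qed.

Lemma sym n (F : R -> R) :
  \sum_(f : {ffun 'I_n -> bool}) F (sgn f) = \sum_(f : {ffun 'I_n -> bool}) F (- sgn f).
Proof.
have inv : involutive (fun f : {ffun 'I_n -> bool} => [ffun i => ~~ f i]).
  by move=> f; apply/ffunP => i; rewrite !ffunE negbK.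
rewrite (reindex_inj (inv_inj inv)) /=; apply: eq_bigr => f _.
congr F; rewrite /sgn -sumrN; apply: eq_bigr => i _; rewrite ffunE /eps.
by case: (f i) => /=; rewrite ?opprK.
Qed.
Definition ind (b : bool) : R := if b then 1 else 0.
Lemma pointwise (N c s : R) : 0 < N -> 0 <= c -> c ^+ 2 = N / 4 ->
  8 * N * s ^+ 2 <= 2 * N ^+ 2 + s ^+ 4 + 16 * N ^+ 2 * (ind (c < s) + ind (s < - c)).
Proof.
move=> N0 c0 cN.
have h4 : 0 <= s ^+ 4 - 8 * N * s ^+ 2 + 16 * N ^+ 2.
  have -> : s ^+ 4 - 8 * N * s ^+ 2 + 16 * N ^+ 2 = (s ^+ 2 - 4 * N) ^+ 2 by ring.
  exact: sqr_ge0.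
have s4 : 0 <= s ^+ 4 by rewrite (_ : s ^+ 4 = (s ^+ 2) ^+ 2) ?sqr_ge0 -?exprM.
have [h1|h1] := ltP c s; have [h2|h2] := ltP s (- c); rewrite /ind.
- nra.
- nra.
- nra.
- have : s ^+ 2 <= c ^+ 2.
    rewrite -subr_ge0.
    have -> : c ^+ 2 - s ^+ 2 = (c - s) * (c + s) by ring.
    by apply: mulr_ge0; lra.
  nra.
Qed.

Lemma count_bound n (c : R) : (0 < n)%N -> c = Num.sqrt n%:R / 2 ->
  3 / 32 * 2 ^+ n <= \sum_(f : {ffun 'I_n -> bool}) ind (c < sgn f).
Proof.
move=> n0 ->; set N : R := n%:R; set c' := Num.sqrt N / 2.
have N0 : 0 < N by rewrite ltr0n.
have c0 : 0 <= c' by rewrite divr_ge0 ?sqrtr_ge0.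
have cN : c' ^+ 2 = N / 4.
  by rewrite expr_div_n sqr_sqrtr ?ler0n //; lra.
have [M0 M2 M4] := moments n.
have H : \sum_(f : {ffun 'I_n -> bool}) 8 * N * sgn f ^+ 2 <=
  \sum_(f : {ffun 'I_n -> bool}) (2 * N ^+ 2 + sgn f ^+ 4 +
       16 * N ^+ 2 * (ind (c' < sgn f) + ind (sgn f < - c'))).
  by apply: ler_sum => f _; exact: pointwise.
rewrite -mulr_sumr M2 !big_split /= -!mulr_sumr M4 big_split /= in H.
have Hs : \sum_(f : {ffun 'I_n -> bool}) ind (sgn f < - c') =
          \sum_(f : {ffun 'I_n -> bool}) ind (c' < sgn f).
  rewrite (sym n (fun x => ind (x < - c'))) /=.
  by apply: eq_bigr => f _; rewrite ltrNl opprK.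
have H0 : \sum_(i : {ffun 'I_n -> bool}) N = N * 2 ^+ n.
  by rewrite -M0 mulr_sumr; apply: eq_bigr => *; rewrite mulr1.
rewrite Hs H0 in H.
move: H; set a := \sum_(f : {ffun 'I_n -> bool}) _.
move=> H.
have P2 : 0 < 2 ^+ n :> R by rewrite exprn_gt0.
rewrite -/N in H; nra.
Qed.
End Comb.

Section Meas.
Variables (d : measure_display) (T : measurableType d) (R : realType)
    (P : probability T R) (n : nat) (X : 'I_n -> {RV P >-> R}).

Definition E (f : {ffun 'I_n -> bool}) : set T :=
  \bigcap_(i in [set j | j \in [set: 'I_n]%SET]) (X i @^-1` [set eps R (f i)]).

Lemma memE f w : E f w <-> forall i, X i w = eps R (f i).
Proof.
split; first by move=> H i; apply: H; rewrite /= inE.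
by move=> H i _; apply: H.
Qed.

Lemma mE f : measurable (E f).
Proof.
apply: fin_bigcap_measurable; first exact: finite_finset.
by move=> i _; apply: measurable_funPTI; exact: measurable_set1.
Qed.

Lemma eps_inj : injective (eps R).
Proof. by move=> [] [] //=; rewrite /eps => h; exfalso; lra. Qed.

Lemma E_inj f g w : E f w -> E g w -> f = g.
Proof.
move=> /memE Hf /memE Hg; apply/ffunP => i; apply: eps_inj.
by rewrite -Hf -Hg.
Qed.

Lemma in_bigU (s : seq {ffun 'I_n -> bool}) (p : pred {ffun 'I_n -> bool}) w :
  (\big[setU/set0]_(f <- s | p f) E f) w -> exists2 f, (f \in s) && p f & E f w.
Proof.
elim: s => [|x s IH]; first by rewrite big_nil.
rewrite big_cons; case: ifP => px.
  case=> [Ex|/IH [f /andP[fs pf] Ef]]; first by exists x; rewrite ?mem_head.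
  by exists f => //; rewrite in_cons fs orbT.
by move/IH => [f /andP[fs pf] Ef]; exists f => //; rewrite in_cons fs orbT.
Qed.

Lemma add_seq (s : seq {ffun 'I_n -> bool}) (p : pred {ffun 'I_n -> bool}) :
  uniq s -> P (\big[setU/set0]_(f <- s | p f) E f) = (\sum_(f <- s | p f) P (E f))%E.
Proof.
elim: s => [|x s IH]; first by rewrite !big_nil measure0.
move=> /= /andP[xs us]; rewrite !big_cons; case: ifP => px; last exact: IH.
rewrite measureU; first by rewrite -IH.
- exact: mE.
- by apply: bigsetU_measurable => f _; exact: mE.
apply/seteqP; split => // w [Ex /in_bigU [f /andP[fs _] Ef]].
by move: xs; rewrite (E_inj Ex Ef) fs.
Qed.
End Meas.

Theorem lemma2 (d : measure_display) (T : measurableType d) (R : realType)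
    (P : probability T R) (n : nat) (X : 'I_n -> {RV P >-> R}) :
  (0 < n)%N ->
  mutually_independent X ->
  (forall i, rademacher (X i)) ->
  ((3 / 32)%:E <= P [set w | (Num.sqrt (n%:R : R) / 2 < \sum_(i < n) X i w)%R])%E.
Proof.
move=> n0 hind hrad.
set c := Num.sqrt (n%:R : R) / 2.
set G := [set w | c < \sum_(i < n) X i w].
have mG : measurable G.
  have := @measurable_sum _ T R setT _ (index_enum 'I_n) (fun i => X i)
    (fun i => measurable_funP (X i)).
  move=> /(_ measurableT `]c, +oo[%classic (measurable_itv _)).
  rewrite setTI; congr measurable; apply/seteqP; split => w /=;
    by rewrite in_itv /= andbT.
have PE : forall f, P (E X f) = ((1/2) ^+ n)%:E.
  move=> f; rewrite /E.
  have -> := hind [set: 'I_n]%SET (fun i => [set eps R (f i)])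
    (fun i => measurable_set1 _).
  rewrite (eq_bigr (fun _ => (1/2)%:E)); last first.
    by move=> i _; case: (f i) (hrad i) => [][h1 h2]; rewrite /eps ?h1 ?h2.
  by rewrite prodEFin prodr_const cardsT card_ord.
have sub : \big[setU/set0]_(f <- index_enum _ | c < sgn R f) E X f `<=` G.
  move=> w /in_bigU [f /andP[_ cf] /memE Ef]; rewrite /G /=.
  by rewrite (eq_bigr (fun i => eps R (f i))) // => i _; rewrite Ef.
have mU : (\big[setU/set0]_(f <- index_enum _ | c < sgn R f) E X f) \in measurable.
  by rewrite inE; apply: bigsetU_measurable => f _; exact: mE.
have mG' : G \in measurable by rewrite inE.
have LE : (P (\big[setU/set0]_(f <- index_enum _ | (c < sgn R f)%R) E X f) <= P G)%E.
  exact: (le_measure _ mU mG' sub).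
apply: le_trans LE.
rewrite add_seq ?index_enum_uniq //.
rewrite (eq_bigr (fun _ => ((1/2) ^+ n)%:E)); last by move=> f _; rewrite PE.
rewrite sumEFin lee_fin.
have -> : \sum_(f : {ffun 'I_n -> bool} | c < sgn R f) (1/2 : R) ^+ n =
   (\sum_(f : {ffun 'I_n -> bool}) ind R (c < sgn R f)) * (1/2) ^+ n.
  rewrite big_mkcond mulr_suml; apply: eq_bigr => f _.
  by rewrite /ind; case: ifP; rewrite ?mul1r ?mul0r.
have := count_bound n0 (erefl c).
have h2 : (1/2 : R) ^+ n * 2 ^+ n = 1 by rewrite -exprMn mul1r mulVf ?expr1n.
have p2 : 0 < (1/2 : R) ^+ n by rewrite exprn_gt0.
move=> H; nra.
Qed.
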